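(* Let $a\in\mathbb{Z}$ and $m\in\mathbb{Z}$ with $m>0$, and let $s$, $m_s$, $a_0$, $d_i$, $d_i^1$ be as in the context. Then: (i) $a=a_0\,d_0^1d_1^1\cdots d_{s-1}^1$; (ii) $m=d_0d_1\cdots d_{s-1}\,m_s=(d_0^1)^1(d_1^1)^2(d_2^1)^3\cdots(d_{s-1}^1)^s\,m_s$, so in particular $m_s\mid m$; (iii) $\gcd(a_0,m_s)=1$ and $\gcd(d_i^1,m_s)=1$ for all $0\le i\le s-1$; consequently $\gcd(a,m_s)=1$ and $a^{\varphi(m_s)}\equiv 1\pmod{m_s}$.
   Context: $\gcd$ denotes the greatest common divisor, always chosen positive, with the convention $\gcd(0,n)=n$ for $n>0$. $\varphi$ denotes Euler's totient function. Let $a\in\mathbb{Z}$ and $m\in\mathbb{Z}$ with $m>0$. The sequences are defined as follows. - Put $d_0=\gcd(a,m)$, $a_0=a/d_0$ and $m_0=m/d_0$. - For $i\ge 1$, and only as long as $d_{i-1}\neq 1$, put $d_i=\gcd(d_{i-1},m_{i-1})$, $m_i=m_{i-1}/d_i$ and $d_{i-1}^1=d_{i-1}/d_i$. The index $s\ge 0$ is the least index with $d_s=1$; such an index exists. Empty products equal $1$, so when $s=0$ the statements read $a=a_0$ and $m=m_0$. *)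

(* Defs.v *)
From mathcomp Require Import all_boot all_order all_algebra.
Set Implicit Arguments. Unset Strict Implicit. Unset Printing Implicit Defensive.
Import Order.TTheory GRing.Theory Num.Theory.
Local Open Scope ring_scope.

(* The recursion is extended past the first index s with d_s = 1 (it then
   stabilises: d_i = 1, m_i = m_s), but only indices <= s are used. *)
Fixpoint dm (a m : int) (i : nat) : int * int :=
  match i with
  | 0%N => let d := gcdz a m in (d, (m %/ d)%Z)
  | i'.+1 => let p := dm a m i' in
             let d := gcdz p.1 p.2 in (d, (p.2 %/ d)%Z)
  end.

Definition seq_d (a m : int) (i : nat) : int := (dm a m i).1.
Definition seq_m (a m : int) (i : nat) : int := (dm a m i).2.
Definition seq_a0 (a m : int) : int := (a %/ seq_d a m 0)%Z.
Definition seq_d1 (a m : int) (i : nat) : int :=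
  (seq_d a m i %/ seq_d a m i.+1)%Z.

(* Main.v *)
Require Import Defs.
From mathcomp Require Import all_boot all_order all_algebra.
From mathcomp Require Import cyclic zify ring.
Import Order.TTheory GRing.Theory Num.Theory.
Local Open Scope ring_scope.

Lemma gcdz_ge0 x y : 0 <= gcdz x y. Proof. by []. Qed.

Lemma gcdz_gt0 x y : 0 < y -> 0 < gcdz x y.
Proof.
move=> hy; rewrite lt_neqAle gcdz_ge0 andbT eq_sym gcdz_eq0.
by apply/negP=> /andP[_ /eqP y0]; rewrite y0 in hy.
Qed.
Arguments gcdz_gt0 x [y].

Lemma coprime_div_gcd x y : 0 < y ->
  coprimez (x %/ gcdz x y)%Z (y %/ gcdz x y)%Z.
Proof.
move=> hy; have gp := gcdz_gt0 x hy.
set g := gcdz x y.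
have e: gcdz (x %/ g)%Z (y %/ g)%Z * `|g|%:Z = g.
  by rewrite mulz_gcdl !divzK // ?dvdz_gcdl ?dvdz_gcdr.
have ag : `|g|%:Z = g by rewrite gtz0_abs.
rewrite ag in e.
apply/eqP; have : (gcdz (x %/ g)%Z (y %/ g)%Z - 1) * g = 0 by rewrite mulrBl e mul1r subrr.
move/eqP; rewrite mulf_eq0 (gt_eqF gp) orbF subr_eq0 => /eqP //.
Qed.

Lemma coprimez_dvd x y z : coprimez x y -> (z %| y)%Z -> coprimez x z.
Proof. by rewrite /coprimez => h; rewrite dvdzE => d; apply: coprime_dvdr d h. Qed.

Section S.
Variables (a m : int).
Hypothesis mpos : 0 < m.
Local Notation d := (seq_d a m).
Local Notation M := (seq_m a m).
Local Notation d1 := (seq_d1 a m).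

Lemma dS i : d i.+1 = gcdz (d i) (M i). Proof. by []. Qed.
Lemma MS i : M i.+1 = (M i %/ d i.+1)%Z. Proof. by []. Qed.
Lemma d0 : d 0 = gcdz a m. Proof. by []. Qed.
Lemma M0 : M 0 = (m %/ d 0)%Z. Proof. by []. Qed.

Lemma posM i : 0 < M i.
Proof.
elim: i => [|i IH].
  have gp := gcdz_gt0 a mpos.
  have e := divzK (dvdz_gcdr a m).
  have mp := mpos; rewrite M0 d0; rewrite -e in mp; nia.
have gp := gcdz_gt0 (d i) IH.
have e := divzK (dvdz_gcdr (d i) (M i)).
rewrite MS dS. rewrite -e in IH; nia.
Qed.

Lemma posd i : 0 < d i.
Proof. case: i => [|i]; [exact: gcdz_gt0 | exact: gcdz_gt0 (posM i)]. Qed.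

Lemma Mrec i : M i = d i.+1 * M i.+1.
Proof. by rewrite MS mulrC divzK // dS dvdz_gcdr. Qed.

Lemma mrec : m = d 0 * M 0.
Proof. by rewrite M0 mulrC divzK // d0 dvdz_gcdr. Qed.

Lemma drec i : d i = d1 i * d i.+1.
Proof. by rewrite /seq_d1 divzK // dS dvdz_gcdl. Qed.

Lemma arec : a = seq_a0 a m * d 0.
Proof. by rewrite /seq_a0 divzK // d0 dvdz_gcdl. Qed.

Lemma m_prod k : m = (\prod_(j < k.+1) d j) * M k.
Proof.
elim: k => [|k IH]; first by rewrite big_ord_recr big_ord0 /= GRing.mul1r; exact: mrec.
by rewrite big_ord_recr /= -mulrA -Mrec; exact: IH.
Qed.

Lemma d_prod k : d 0 = (\prod_(j < k) d1 j) * d k.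
Proof.
elim: k => [|k IH]; first by rewrite big_ord0 mul1r.
by rewrite big_ord_recr /= IH drec mulrA.
Qed.

Lemma pow_prod k : \prod_(j < k) d j = (\prod_(j < k) d1 j ^+ j.+1) * d k ^+ k.
Proof.
elim: k => [|k IH]; first by rewrite !big_ord0 expr0 mul1r.
rewrite big_ord_recr [in RHS]big_ord_recr /= IH drec.
rewrite !exprMn !exprS; ring.
Qed.

Lemma M_dvd k i : (M (i + k) %| M i)%Z.
Proof.
elim: k => [|k IH]; first by rewrite addn0 dvdzz.
apply: dvdz_trans IH; rewrite addnS (Mrec (i + k)); exact: dvdz_mull (dvdzz _).
Qed.

Lemma cop_d1 i : coprimez (d1 i) (M i.+1).
Proof. rewrite /seq_d1 MS dS; exact: coprime_div_gcd (posM i). Qed.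

Lemma cop_a0 : coprimez (seq_a0 a m) (M 0).
Proof. rewrite /seq_a0 M0 d0; exact: coprime_div_gcd. Qed.

End S.

Lemma powz_nat (k e : nat) : (k%:Z) ^+ e = (k ^ e)%N%:Z.
Proof. elim: e => [|e IH]; first by []. by rewrite exprS IH expnS PoszM. Qed.

Theorem mainTheorem4 (a m : int) (s : nat) :
  0 < m ->
  seq_d a m s = 1 ->
  (forall i : nat, (i < s)%N -> seq_d a m i != 1) ->
  (* (i) *)
  a = seq_a0 a m * \prod_(i < s) seq_d1 a m i /\
  (* (ii) *)
  m = (\prod_(i < s) seq_d a m i) * seq_m a m s /\
  m = (\prod_(i < s) seq_d1 a m i ^+ i.+1) * seq_m a m s /\
  (seq_m a m s %| m)%Z /\
  (* (iii) *)
  gcdz (seq_a0 a m) (seq_m a m s) = 1 /\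
  (forall i : nat, (i < s)%N -> gcdz (seq_d1 a m i) (seq_m a m s) = 1) /\
  gcdz a (seq_m a m s) = 1 /\
  (a ^+ totient `|seq_m a m s|%N == 1 %[mod seq_m a m s])%Z.
Proof.
move=> mpos ds _.
have hm : m = (\prod_(i < s) seq_d a m i) * seq_m a m s.
  by rewrite {1}(m_prod a m s) big_ord_recr /= ds mulr1.
have hd0 : seq_d a m 0 = \prod_(i < s) seq_d1 a m i.
  by rewrite (d_prod a m s) ds mulr1.
have ha : a = seq_a0 a m * \prod_(i < s) seq_d1 a m i by rewrite -hd0 -arec.
have cd : forall i, (i < s)%N -> coprimez (seq_d1 a m i) (seq_m a m s).
  move=> i lis; apply: coprimez_dvd (@cop_d1 a m mpos i) _.
  by rewrite -(subnKC lis); apply: M_dvd.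
have ca : coprimez (seq_a0 a m) (seq_m a m s).
  by apply: coprimez_dvd (@cop_a0 a m mpos) _; rewrite -[s]add0n; apply: M_dvd.
have cA : coprimez a (seq_m a m s).
  rewrite {1}ha coprimezMl ca /=.
  apply: (big_ind (fun x => coprimez x (seq_m a m s))).
  - by rewrite /coprimez gcd1z.
  - by move=> x y hx hy; rewrite coprimezMl hx.
  - by move=> i _; apply: cd.
split=> //; split=> //; split.
  by rewrite {1}hm (pow_prod a m s) ds expr1n mulr1.
split; first by apply/dvdzP; exists (\prod_(i < s) seq_d a m i).
split; first by apply/eqP.
split; first by move=> i /cd /eqP.
split; first by apply/eqP.
have msp := @posM a m mpos s.
move: cA; set ms := seq_m a m s => cA.
have r0 : 0 <= (a %% ms)%Z by apply: modz_ge0; rewrite gt_eqF.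
have cr : coprime `|(a %% ms)%Z|%N `|ms|%N.
  by rewrite -coprimezE /coprimez gcdz_modl.
have E := Euler_exp_totient cr.
rewrite -modzXm -(gez0_abs r0) -modz_abs.
rewrite powz_nat !modz_nat E.
by rewrite -(modz_nat 1) modz_abs.
Qed.
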